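(* Let $W$ be the affine Weyl group of type $A_2^{(1)}$ and $N\in\mathbb{N}$. Let $w\in W^0$ with $\mathcal{L}_{\Lambda_0}(w)=N$. Then (1) $\mathcal{O}_N(w)=\bigsqcup_{i=0}^{2}\widehat{O}_N(\sigma_i w)$; (2) $\mathcal{U}(12N+4)=\bigsqcup_{v\in\widehat{\mathcal{B}}(N)}\widehat{O}_N(v)$.
   Context: Affine Kac–Moody setting of type $A_2^{(1)}$: $\mathfrak{h}^*$ contains simple roots $\alpha_0,\alpha_1,\alpha_2$, null root $\delta=\alpha_0+\alpha_1+\alpha_2$, the affine fundamental weight $\Lambda_0$, and $\rho^\vee\in\mathfrak h$ satisfies $\langle\alpha_i,\rho^\vee\rangle=1$ for all $i$; $c=\alpha_0^\vee+\alpha_1^\vee+\alpha_2^\vee$ is the canonical central element. The finite part $V_0=\mathbb{R}\alpha_1\oplus\mathbb{R}\alpha_2$ is identified with $\{x\in\mathbb{R}^3\mid x_1+x_2+x_3=0\}$ via $\alpha_1=\varepsilon_1-\varepsilon_2$, $\alpha_2=\varepsilon_2-\varepsilon_3$, with the standard dot product $(\cdot|\cdot)$ (extended to the standard invariant form on $\mathfrak h^*$). For $x\in V_0$, $t_x\in GL(\mathfrak h^* )$ is $t_x(v)=v+\langle v,c\rangle x-((v|x)+\frac12|x|^2\langle v,c\rangle)\delta$. $W_0=\langle s_1,s_2\rangle\cong S_3$ (permuting coordinates), $M=V_0\cap\mathbb{Z}^3$, $W=\langle s_0,s_1,s_2\rangle=T(M)\rtimes W_0$, and every $w\in W$ is uniquely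 $w=t_q\overline w$ with $q\in M$, $\overline w\in W_0$. $W^0=\{w\in W\mid \ell(ws_k)>\ell(w),\ k=1,2\}$ ($\ell$ = Coxeter length). Fundamental weights $\omega_1=(2/3,-1/3,-1/3)$, $\omega_2=(1/3,1/3,-2/3)$, $\omega_0=0$. $\sigma_0=e$, $\sigma_1=t_{\omega_1}s_1s_2$, $\sigma_2=t_{\omega_2}s_2s_1$ in the extended affine Weyl group $\widehat W=T(L)\rtimes W_0$, $L=\mathbb{Z}\omega_1+\mathbb{Z}\omega_2$; $\Sigma=\{\sigma_0,\sigma_1,\sigma_2\}$. For $g\in GL(\mathfrak h^* )$, the atomic length is $\mathcal{L}_{\Lambda_0}(g)=\langle\Lambda_0-g\Lambda_0,\rho^\vee\rangle$. $\widehat{\mathcal{B}}(N)=\{v\in\Sigma W^0\mid \mathcal{L}_{\Lambda_0}(v)=N\}$ where $\Sigma W^0=\{\sigma w\mid\sigma\in\Sigma, w\in W^0\}$. Let $M_0=\mathrm{id}$, $M_1(q_1,q_2,q_3)=(q_3,q_1,q_2)$, $M_2(q_1,q_2,q_3)=(q_2,q_3,q_1)$ (the matrices of $e$, $s_1s_2$, $s_2s_1$). Let $p:\mathbb{R}^3\to\mathbb{R}^2$, $p(x,y,z)=(3x+6y-1,3x-1)$, and $R=\frac12\begin{pmatrix}1&-3\\1&1\end{pmatrix}$. $\mathcal{U}(k)=\{(x,y)\in\mathbb{Z}^2\mid x^2+3y^2=k\}$. For $w=t_q\overline w\in W^0$ with $\mathcal{L}_{\Lambda_0}(w)=N$: $\mathcal{O}_N(w)=\{R^kp(q)\mid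 k=1,\dots,6\}$, and for $i\in\{0,1,2\}$, $\widehat{O}_N(\sigma_iw)=\{p(\omega_i+M_i(q)),\,-p(\omega_i+M_i(q))\}$. *)

(* Defs.v *)
From HB Require Import structures.
From mathcomp Require Import all_boot all_order all_algebra.
Set Implicit Arguments. Unset Strict Implicit. Unset Printing Implicit Defensive.
Import Order.TTheory GRing.Theory Num.Theory.
Local Open Scope ring_scope.

(* h^* : a vector v = c1*alpha_1 + c2*alpha_2 + lev*Lambda_0 + del*delta. *)
Record hsp := HS { hc1 : rat; hc2 : rat; hlev : rat; hdel : rat }.

Definition hadd (u v : hsp) : hsp :=
  HS (hc1 u + hc1 v) (hc2 u + hc2 v) (hlev u + hlev v) (hdel u + hdel v).
Definition hscale (a : rat) (v : hsp) : hsp :=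
  HS (a * hc1 v) (a * hc2 v) (a * hlev v) (a * hdel v).
Definition hsub (u v : hsp) : hsp := hadd u (hscale (-1) v).

Definition V3 := (rat * rat * rat)%type.
Definition dot3 (x y : V3) : rat := x.1.1 * y.1.1 + x.1.2 * y.1.2 + x.2 * y.2.
Definition add3 (x y : V3) : V3 := (x.1.1 + y.1.1, x.1.2 + y.1.2, x.2 + y.2).
Definition inV0 (x : V3) : Prop := x.1.1 + x.1.2 + x.2 = 0.

(* finite part of v in R^3, using alpha_1 = e1-e2, alpha_2 = e2-e3 *)
Definition finp (v : hsp) : V3 := (hc1 v, hc2 v - hc1 v, - hc2 v).
(* embedding V_0 -> h^* : x = x1 alpha_1 + (x1+x2) alpha_2 *)
Definition of_V0 (x : V3) : hsp := HS x.1.1 (x.1.1 + x.1.2) 0 0.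

(* standard invariant form: V_0 orthogonal to Lambda_0, delta;
   (Lambda_0|delta) = 1, (Lambda_0|Lambda_0) = (delta|delta) = 0 *)
Definition form (u v : hsp) : rat :=
  dot3 (finp u) (finp v) + hlev u * hdel v + hdel u * hlev v.

Definition Lambda0 : hsp := HS 0 0 1 0.
Definition delta : hsp := HS 0 0 0 1.
Definition alpha (i : nat) : hsp :=
  match i with
  | 0 => HS (-1) (-1) 0 1      (* alpha_0 = delta - alpha_1 - alpha_2 *)
  | 1 => HS 1 0 0 0
  | _ => HS 0 1 0 0
  end.

Definition pair_c (v : hsp) : rat := hlev v.
(* <v, rho^vee> with <alpha_i, rho^vee> = 1 (i = 0,1,2), <Lambda_0, rho^vee> := 0 *)
Definition pair_rho (v : hsp) : rat := hc1 v + hc2 v + 3 * hdel v.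

(* simple reflections s_i v = v - <v, alpha_i^vee> alpha_i ; simply laced,
   so <v, alpha_i^vee> = (v | alpha_i) *)
Definition s (i : nat) (v : hsp) : hsp := hsub v (hscale (form v (alpha i)) (alpha i)).

Definition t (x : V3) (v : hsp) : hsp :=
  hadd (hadd v (hscale (pair_c v) (of_V0 x)))
       (hscale (- (form v (of_V0 x) + (1/2) * dot3 x x * pair_c v)) delta).

Definition word (ws : seq 'I_3) : hsp -> hsp := foldr (fun (i : 'I_3) f => s i \o f) id ws.

Definition inW (w : hsp -> hsp) : Prop := exists ws, word ws = w.
Definition inW0 (w : hsp -> hsp) : Prop :=
  exists ws : seq 'I_3, all (fun i : 'I_3 => i != 0%N :> nat) ws /\ word ws = w.

Definition is_length (w : hsp -> hsp) (n : nat) : Prop :=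
  (exists ws, size ws = n /\ word ws = w) /\
  (forall ws, word ws = w -> (n <= size ws)%N).

Definition inWzero (w : hsp -> hsp) : Prop :=
  inW w /\ forall (k : nat), (k = 1 \/ k = 2)%N ->
    forall n m, is_length w n -> is_length (w \o s k) m -> (n < m)%N.

Definition atomic_len (g : hsp -> hsp) : rat := pair_rho (hsub Lambda0 (g Lambda0)).

Definition omega (i : nat) : V3 :=
  match i with
  | 0 => (0, 0, 0)
  | 1 => (2/3, -1/3, -1/3)
  | _ => (1/3, 1/3, -2/3)
  end.

Definition sigma (i : nat) : hsp -> hsp :=
  match i with
  | 0 => id
  | 1 => t (omega 1) \o s 1 \o s 2
  | _ => t (omega 2) \o s 2 \o s 1
  end.

Definition Mperm (i : nat) (q : V3) : V3 :=
  match i with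
  | 0 => q
  | 1 => (q.2, q.1.1, q.1.2)
  | _ => (q.1.2, q.2, q.1.1)
  end.

Definition inM (q : V3) : Prop :=
  (exists a b c : int, q = (a%:~R, b%:~R, c%:~R)) /\ inV0 q.

Definition decomp (w : hsp -> hsp) (q : V3) : Prop :=
  inM q /\ exists wb, inW0 wb /\ w = t q \o wb.

Definition P2 := (rat * rat)%type.
Definition neg2 (x : P2) : P2 := (- x.1, - x.2).

Definition p (x : V3) : P2 := (3 * x.1.1 + 6 * x.1.2 - 1, 3 * x.1.1 - 1).
Definition Rm (x : P2) : P2 := ((x.1 - 3 * x.2) / 2, (x.1 + x.2) / 2).

Definition U (k : int) (x : P2) : Prop :=
  exists a b : int, x = (a%:~R, b%:~R) /\ a ^+ 2 + 3 * b ^+ 2 = k.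

Definition Oset (w : hsp -> hsp) (x : P2) : Prop :=
  exists q, decomp w q /\ exists k : nat, (1 <= k <= 6)%N /\ x = iter k Rm (p q).

Definition Ohat (v : hsp -> hsp) (x : P2) : Prop :=
  exists (i : 'I_3) (w : hsp -> hsp) (q : V3),
    inWzero w /\ v = sigma i \o w /\ decomp w q /\
    (x = p (add3 (omega i) (Mperm i q)) \/ x = neg2 (p (add3 (omega i) (Mperm i q)))).

Definition inSigmaW0 (v : hsp -> hsp) : Prop :=
  exists (i : 'I_3) w, inWzero w /\ v = sigma i \o w.

Definition inBhat (N : nat) (v : hsp -> hsp) : Prop :=
  inSigmaW0 v /\ atomic_len v = N%:R.

(* Main.v *)
Require Import Defs.
From mathcomp Require Import all_boot all_order all_algebra.
From mathcomp Require Import ring lra zify.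
From Stdlib Require Import FunctionalExtensionality.
Set Implicit Arguments. Unset Strict Implicit. Unset Printing Implicit Defensive.
Import Order.TTheory GRing.Theory Num.Theory.
Local Open Scope ring_scope.



Inductive P3 := pI | p12 | p23 | p13 | pc | pd.

Definition Pm (pi : P3) (x : V3) : V3 :=
  match pi with
  | pI => x
  | p12 => (x.1.2, x.1.1, x.2)
  | p23 => (x.1.1, x.2, x.1.2)
  | p13 => (x.2, x.1.2, x.1.1)
  | pc => (x.2, x.1.1, x.1.2)
  | pd => (x.1.2, x.2, x.1.1)
  end.

Definition l13 pi := match pi with pI => p13 | p12 => pc | p23 => pd | p13 => pI | pc => p12 | pd => p23 end.
Definition l12 pi := match pi with pI => p12 | p12 => pI | p23 => pc | p13 => pd | pc => p23 | pd => p13 end.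
Definition l23 pi := match pi with pI => p23 | p12 => pd | p23 => pI | p13 => pc | pc => p13 | pd => p12 end.
Definition r12 pi := match pi with pI => p12 | p12 => pI | p23 => pd | p13 => pc | pc => p13 | pd => p23 end.
Definition r23 pi := match pi with pI => p23 | p12 => pc | p23 => pI | p13 => pd | pc => p12 | pd => p13 end.
Definition lc pi := match pi with pI => pc | p12 => p13 | p23 => p12 | p13 => p23 | pc => pd | pd => pI end.
Definition ld pi := match pi with pI => pd | p12 => p23 | p23 => p13 | p13 => p12 | pc => pI | pd => pc end.

Definition F (a b : rat) (pi : P3) (v : hsp) : hsp :=
  let q : V3 := (a, b, -a-b) in let x := Pm pi (finp v) in let l := hlev v in
  HS (x.1.1 + l*a) (x.1.1 + l*a + (x.1.2 + l*b)) l
     (hdel v - dot3 x q - 1/2 * dot3 q q * l).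

Ltac fcomp := apply: functional_extensionality => -[c1 c2 l d];
  rewrite /s /F /t /of_V0 /hsub /hadd /hscale /Defs.form /dot3 /finp /pair_c /=; congr HS.

Lemma s0_F a b pi : s 0 \o F a b pi = F (1-a-b) b (l13 pi).
Proof. by case: pi; fcomp; field. Qed.
Lemma s1_F a b pi : s 1 \o F a b pi = F b a (l12 pi).
Proof. by case: pi; fcomp; field. Qed.
Lemma s2_F a b pi : s 2 \o F a b pi = F a (-a-b) (l23 pi).
Proof. by case: pi; fcomp; field. Qed.
Lemma F_s1 a b pi : F a b pi \o s 1 = F a b (r12 pi).
Proof. by case: pi; fcomp; field. Qed.
Lemma F_s2 a b pi : F a b pi \o s 2 = F a b (r23 pi).
Proof. by case: pi; fcomp; field. Qed.
Lemma t_F x1 x2 a b pi : t (x1, x2, -x1-x2) \o F a b pi = F (x1 + a) (x2 + b) pi.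
Proof. by case: pi; fcomp; field. Qed.
Lemma F_id : F 0 0 pI = id.
Proof. by fcomp; field. Qed.

Record el := El { ea : int; eb : int; ep : P3 }.
Definition lmul (i : nat) (e : el) : el :=
  match i with
  | 0 => El (1 - ea e - eb e) (eb e) (l13 (ep e))
  | 1 => El (eb e) (ea e) (l12 (ep e))
  | _ => El (ea e) (- ea e - eb e) (l23 (ep e))
  end.
Definition Fe (e : el) := F (ea e)%:~R (eb e)%:~R (ep e).
Definition ev (ws : seq 'I_3) : el := foldr (fun (i : 'I_3) e => lmul i e) (El 0 0 pI) ws.

Lemma s_Fe (i : nat) e : s i \o Fe e = Fe (lmul i e).
Proof.
case: e => a b pi; rewrite /Fe.
case: i => [|[|i]] /=.
- by rewrite s0_F !rmorphB /=.
- by rewrite s1_F.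
- have -> : s i.+2 = s 2 by [].
  by rewrite s2_F !rmorphB rmorphN.
Qed.

Lemma word_ev ws : word ws = Fe (ev ws).
Proof.
elim: ws => [|i ws IH] /=.
- by rewrite /Fe /= F_id.
- by rewrite -s_Fe -IH.
Qed.




Lemma F_inj a b pi a' b' pi' : F a b pi = F a' b' pi' -> [/\ a = a', b = b' & pi = pi'].
Proof.
move=> H.
have h0 := congr1 (fun f => f (HS 0 0 1 0)) H.
have h1 := congr1 (fun f => f (HS 1 0 0 0)) H.
have h2 := congr1 (fun f => f (HS 0 1 0 0)) H.
have e1 := congr1 hc1 h0; have e2 := congr1 hc2 h0.
have f1 := congr1 hc1 h1; have f2 := congr1 hc2 h1.
have g1 := congr1 hc1 h2; have g2 := congr1 hc2 h2.
clear H h0 h1 h2; move: e1 e2 f1 f2 g1 g2; rewrite /F /finp /=.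
case: pi; case: pi' => /= e1 e2 f1 f2 g1 g2.
all: split; [lra | lra | first [reflexivity | exfalso; lra]].
Qed.



Definition ind1 pi : int := match pi with p12 | p13 | pc => 1 | _ => 0 end.
Definition ind2 pi : int := match pi with p23 | p13 | pd => 1 | _ => 0 end.
Definition ind3 pi : int := match pi with p13 | pc | pd => 1 | _ => 0 end.
Definition nn (e : el) : nat :=
  addn (addn (absz (ea e - eb e - ind1 (ep e))%R) (absz (ea e + 2 * eb e - ind2 (ep e))%R))
   (absz (2 * ea e + eb e - ind3 (ep e))%R).

Lemma nn_lmul i e : nn (lmul i e) = (nn e).+1 \/ (nn (lmul i e)).+1 = nn e.
Proof. case: e => a b pi; case: i => [|[|i]]; case: pi; rewrite /nn /=; lia. Qed.

Lemma lmul_invol (i : nat) e : lmul i (lmul i e) = e.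
Proof. case: e => a b pi; case: i => [|[|i]]; case: pi; rewrite /lmul /=; f_equal; lia. Qed.

Lemma nn0 e : nn e = 0%N -> e = El 0 0 pI.
Proof. case: e => a b pi; case: pi; rewrite /nn /= => H; (have ha : a = 0 by lia); (have hb : b = 0 by lia); subst; first [done | exfalso; lia]. Qed.

Lemma nodesc e : (nn e <= nn (lmul 0 e))%N -> (nn e <= nn (lmul 1 e))%N ->
  (nn e <= nn (lmul 2 e))%N -> nn e = 0%N.
Proof. case: e => a b pi; case: pi; rewrite /nn /=; lia. Qed.

Definition W0c (e : el) :=
  (nn e < nn (El (ea e) (eb e) (r12 (ep e))))%N /\ (nn e < nn (El (ea e) (eb e) (r23 (ep e))))%N.

Lemma W0c_ex a b : exists pi, W0c (El a b pi).
Proof.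
have : W0c (El a b pI) \/ W0c (El a b p12) \/ W0c (El a b p23) \/ W0c (El a b p13)
  \/ W0c (El a b pc) \/ W0c (El a b pd) by rewrite /W0c /nn /=; lia.
by case=> [h|[h|[h|[h|[h|h]]]]]; eexists; exact: h.
Qed.

Lemma W0c_uniq a b pi pi' : W0c (El a b pi) -> W0c (El a b pi') -> pi = pi'.
Proof. by case: pi; case: pi' => //; rewrite /W0c /nn /=; lia. Qed.



Lemma nn_le_size ws : (nn (ev ws) <= size ws)%N.
Proof.
elim: ws => [|i ws IH] //=.
case: (nn_lmul i (ev ws)) => h; lia.
Qed.

Lemma exists_word e : exists ws : seq 'I_3, size ws = nn e /\ ev ws = e.
Proof.
move: {2}(nn e) (erefl (nn e)) => n; elim: n e => [|n IH] e hn.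
  by exists [::]; rewrite (nn0 hn).
have [i hi] : exists i : 'I_3, (nn (lmul i e)).+1 = nn e.
  case: (nn_lmul 0 e) => h0; last by exists (@Ordinal 3 0 isT).
  case: (nn_lmul 1 e) => h1; last by exists (@Ordinal 3 1 isT).
  case: (nn_lmul 2 e) => h2; last by exists (@Ordinal 3 2 isT).
  have := nodesc (e := e); rewrite h0 h1 h2 !leqnSn => /(_ isT isT isT); lia.
have [ws [hs he]] := IH (lmul i e) ltac:(lia).
by exists (i :: ws); rewrite /= hs he lmul_invol; split => //; lia.
Qed.

Lemma Fe_inj e e' : Fe e = Fe e' -> e = e'.
Proof.
case: e e' => a b pi [a' b' pi']; rewrite /Fe /= => /F_inj [/intr_inj ha /intr_inj hb hp].
by rewrite ha hb hp.
Qed.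

Lemma is_length_Fe e : is_length (Fe e) (nn e).
Proof.
split.
  by have [ws [hs he]] := exists_word e; exists ws; rewrite word_ev he.
by move=> ws; rewrite word_ev => /Fe_inj <-; apply: nn_le_size.
Qed.

Lemma is_length_uniq w n m : is_length w n -> is_length w m -> n = m.
Proof.
move=> [[ws1 [h1 e1]] H1] [[ws2 [h2 e2]] H2].
have := H1 ws2 e2; have := H2 ws1 e1; lia.
Qed.

Lemma inW_Fe w : inW w -> exists e, w = Fe e.
Proof. by case=> ws <-; exists (ev ws); rewrite word_ev. Qed.

Lemma inW_Fe' e : inW (Fe e).
Proof. by have [ws [_ he]] := exists_word e; exists ws; rewrite word_ev he. Qed.

Lemma Fe_s1 e : Fe e \o s 1 = Fe (El (ea e) (eb e) (r12 (ep e))).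
Proof. by rewrite /Fe F_s1. Qed.
Lemma Fe_s2 e : Fe e \o s 2 = Fe (El (ea e) (eb e) (r23 (ep e))).
Proof. by rewrite /Fe F_s2. Qed.

Lemma inWzero_Fe e : inWzero (Fe e) <-> W0c e.
Proof.
split.
  case=> _ H; split.
    apply: (H 1%N (or_introl erefl)); first exact: is_length_Fe.
    by rewrite Fe_s1; apply: is_length_Fe.
  apply: (H 2%N (or_intror erefl)); first exact: is_length_Fe.
  by rewrite Fe_s2; apply: is_length_Fe.
case=> h1 h2; split; first exact: inW_Fe'.
move=> k [->|->] n m hn hm.
  rewrite Fe_s1 in hm.
  by rewrite (is_length_uniq hn (is_length_Fe e)) (is_length_uniq hm (is_length_Fe _)).
rewrite Fe_s2 in hm.
by rewrite (is_length_uniq hn (is_length_Fe e)) (is_length_uniq hm (is_length_Fe _)).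
Qed.



Definition qv (a b : rat) : V3 := (a, b, -a-b).
Definition yv (i : nat) (a b : rat) : rat * rat :=
  match i with 0 => (a, b) | 1 => (2/3 + (-a-b), -1/3 + a) | _ => (1/3 + b, 1/3 + (-b-a)) end.
Definition pp (i : nat) pi := match i with 0 => pi | 1 => l12 (l23 pi) | _ => l23 (l12 pi) end.

Lemma sigma_F (i : 'I_3) a b pi :
  sigma i \o F a b pi = F (yv i a b).1 (yv i a b).2 (pp i pi).
Proof.
case: i => [[|[|[|//]]] ?] /=.
- by [].
- change (t (omega 1) \o (s 1 \o (s 2 \o F a b pi)) = F (2/3 + (-a-b)) (-1/3 + a) (l12 (l23 pi))).
  rewrite s2_F s1_F.
  have -> : omega 1 = (2/3, -1/3, -(2/3) - (-1/3)) by rewrite /omega; congr (_, _); field.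
  by rewrite t_F.
- change (t (omega 2) \o (s 2 \o (s 1 \o F a b pi)) = F (1/3 + b) (1/3 + (-b-a)) (l23 (l12 pi))).
  rewrite s1_F s2_F.
  have -> : omega 2 = (1/3, 1/3, -(1/3) - (1/3)) by rewrite /omega; congr (_, _); field.
  by rewrite t_F.
Qed.

Lemma inW0_F pi : inW0 (F 0 0 pi).
Proof.
case: pi.
- by exists [::]; rewrite F_id.
- exists [:: @Ordinal 3 1 isT]; split => //; by rewrite word_ev.
- exists [:: @Ordinal 3 2 isT]; split => //; by rewrite word_ev.
- exists [:: @Ordinal 3 1 isT; @Ordinal 3 2 isT; @Ordinal 3 1 isT]; split => //; by rewrite word_ev.
- exists [:: @Ordinal 3 1 isT; @Ordinal 3 2 isT]; split => //; by rewrite word_ev.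
- exists [:: @Ordinal 3 2 isT; @Ordinal 3 1 isT]; split => //; by rewrite word_ev.
Qed.

Lemma decomp_Fe e : decomp (Fe e) (qv (ea e)%:~R (eb e)%:~R).
Proof.
case: e => a b pi; split.
  split; first by exists a, b, (-a-b); rewrite /qv rmorphB rmorphN.
  by rewrite /inV0 /qv /=; ring.
exists (F 0 0 pi); split; first exact: inW0_F.
by rewrite /qv t_F /Fe !addr0.
Qed.

Lemma ev_W0 ws : all (fun i : 'I_3 => i != 0%N :> nat) ws ->
  ea (ev ws) = 0 /\ eb (ev ws) = 0.
Proof.
elim: ws => [|i ws IH] //= /andP [hi /IH [h1 h2]].
case: i hi => [[|[|[|//]]] ?] //= _; rewrite h1 h2 //.
Qed.

Lemma decomp_inv w q : decomp w q -> exists e, w = Fe e /\ q = qv (ea e)%:~R (eb e)%:~R.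
Proof.
case=> [[[a [b [c ->]]] hv] [wb [[ws [hws <-]] ->]]].
have [h1 h2] := ev_W0 hws.
exists (El a b (ep (ev ws))); split.
  rewrite word_ev /Fe h1 h2.
  have -> : (c%:~R : rat) = - a%:~R - b%:~R by move: hv; rewrite /inV0 /=; lra.
  by rewrite t_F !addr0.
rewrite /qv /=; congr (_, _); move: hv; rewrite /inV0 /=; lra.
Qed.

Definition P2y (y : rat * rat) : P2 := (3 * y.1 + 6 * y.2 - 1, 3 * y.1 - 1).
Definition pint (i : nat) (a b : int) : int * int :=
  match i with
  | 0 => (3*a + 6*b - 1, 3*a - 1)
  | 1 => (3*a - 3*b - 1, 1 - 3*a - 3*b)
  | _ => (2 - 6*a - 3*b, 3*b)
  end.
Definition sgn (s : bool) (z : int * int) : int * int := if s then (- z.1, - z.2) else z.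
Definition castp (z : int * int) : P2 := (z.1%:~R, z.2%:~R).

Lemma p_Mperm (i : 'I_3) a b : p (add3 (omega i) (Mperm i (qv a b))) = P2y (yv i a b).
Proof. by case: i => [[|[|[|//]]] ?]; rewrite /p /add3 /P2y /qv /=; congr (_, _); field. Qed.

Lemma P2y_int (i : nat) a b : P2y (yv i a%:~R b%:~R) = castp (pint i a b).
Proof. by case: i => [|[|i]]; rewrite /P2y /castp /=; congr (_, _); field. Qed.

Lemma castp_sgn s z : castp (sgn s z) = if s then neg2 (castp z) else castp z.
Proof. by case: s; rewrite /castp /neg2 //= !rmorphN. Qed.

Lemma castp_inj z z' : castp z = castp z' -> z = z'.
Proof. by case: z z' => [a b] [a' b'] [/intr_inj -> /intr_inj ->]. Qed.

Lemma res_key (i j : 'I_3) a b a' b' s1 s2 :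
  sgn s1 (pint i a b) = sgn s2 (pint j a' b') -> [/\ i = j, s1 = s2, a = a' & b = b'].
Proof.
case: i => [[|[|[|//]]] ?]; case: j => [[|[|[|//]]] ?]; case: s1; case: s2;
  rewrite /sgn /pint /= => -[h1 h2]; first [split; [apply: val_inj | | |] => //=; lia | exfalso; lia].
Qed.

Lemma Ohat_char (i : 'I_3) e x : inWzero (Fe e) ->
  (Ohat (sigma i \o Fe e) x <-> exists s, x = castp (sgn s (pint i (ea e) (eb e)))).
Proof.
move=> hw; split.
  case=> i' [w' [q' [hw' [hv [hd hx]]]]].
  have [e' [he' hq']] := decomp_inv hd; subst w' q'.
  move: hv; rewrite /Fe !sigma_F => /F_inj [h1 h2 _].
  rewrite p_Mperm in hx.
  have hy : yv i' (ea e')%:~R (eb e')%:~R = yv i (ea e)%:~R (eb e)%:~R.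
    by move: h1 h2; case: (yv i' _ _) => ? ?; case: (yv i _ _) => ? ? /= -> ->.
  rewrite hy P2y_int in hx.
  by case: hx => ->; [exists false | exists true]; rewrite castp_sgn.
case=> sg ->; exists i, (Fe e), (qv (ea e)%:~R (eb e)%:~R).
split => //; split => //; split; first exact: decomp_Fe.
by rewrite p_Mperm P2y_int castp_sgn; case: sg; [right | left].
Qed.

Lemma Oset_char e x :
  Oset (Fe e) x <-> exists k, (1 <= k <= 6)%N /\ x = iter k Rm (castp (pint 0 (ea e) (eb e))).
Proof.
split.
  case=> q [hd [k [hk ->]]]; exists k; split => //.
  have [e' [/Fe_inj <- ->]] := decomp_inv hd.
  by rewrite -P2y_int.
case=> k [hk ->]; exists (qv (ea e)%:~R (eb e)%:~R); split; first exact: decomp_Fe.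
by exists k; split => //; rewrite -P2y_int.
Qed.

Lemma orbit_eq a b k : (1 <= k <= 6)%N ->
  exists (i : 'I_3) s, iter k Rm (castp (pint 0 a b)) = castp (sgn s (pint i a b)).
Proof.
case: k => [|[|[|[|[|[|[|k]]]]]]] //= _.
- by exists (@Ordinal 3 1 isT), true; rewrite /Rm /castp /=; congr (_, _); field.
- by exists (@Ordinal 3 2 isT), false; rewrite /Rm /castp /=; congr (_, _); field.
- by exists (@Ordinal 3 0 isT), true; rewrite /Rm /castp /=; congr (_, _); field.
- by exists (@Ordinal 3 1 isT), false; rewrite /Rm /castp /=; congr (_, _); field.
- by exists (@Ordinal 3 2 isT), true; rewrite /Rm /castp /=; congr (_, _); field.
- by exists (@Ordinal 3 0 isT), false; rewrite /Rm /castp /=; congr (_, _); field.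
Qed.

Lemma orbit_eq2 a b (i : 'I_3) s : exists k, (1 <= k <= 6)%N /\
  iter k Rm (castp (pint 0 a b)) = castp (sgn s (pint i a b)).
Proof.
case: i => [[|[|[|//]]] ?]; case: s.
- by exists 3%N; split => //; rewrite /Rm /castp /=; congr (_, _); field.
- by exists 6%N; split => //; rewrite /Rm /castp /=; congr (_, _); field.
- by exists 1%N; split => //; rewrite /Rm /castp /=; congr (_, _); field.
- by exists 4%N; split => //; rewrite /Rm /castp /=; congr (_, _); field.
- by exists 5%N; split => //; rewrite /Rm /castp /=; congr (_, _); field.
- by exists 2%N; split => //; rewrite /Rm /castp /=; congr (_, _); field.
Qed.

Definition Ly (y : rat * rat) : rat :=
  - (2 * y.1 + y.2) + 3/2 * (y.1 * y.1 + y.2 * y.2 + (y.1 + y.2) * (y.1 + y.2)).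

Lemma atomic_F a b pi : atomic_len (F a b pi) = Ly (a, b).
Proof. by case: pi; rewrite /atomic_len /F /Ly /pair_rho /hsub /hadd /hscale /Lambda0 /finp /dot3 /=; field. Qed.

Lemma atomic_sigma (i : 'I_3) e : atomic_len (sigma i \o Fe e) = Ly (yv i (ea e)%:~R (eb e)%:~R).
Proof. by rewrite /Fe sigma_F atomic_F; case: (yv _ _ _). Qed.

Lemma norm_pint (i : nat) a b :
  (((pint i a b).1 ^+ 2 + 3 * (pint i a b).2 ^+ 2)%:~R : rat) = 12 * Ly (yv i a%:~R b%:~R) + 4.
Proof. by case: i => [|[|i]]; rewrite /Ly /pint /=; field. Qed.



Lemma U_solve (A B : int) (N : nat) : A ^+ 2 + 3 * B ^+ 2 = (12 * N + 4)%N ->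
  exists (i : 'I_3) s a b, (A, B) = sgn s (pint i a b).
Proof.
move=> h.
have h1 : (A %% 3)%Z <> 0 by nia.
have h2 : ((A - B) %% 2)%Z = 0 by nia.
have [hA|hA] : (A %% 3)%Z = 1 \/ (A %% 3)%Z = 2 by lia.
all: have [hB|[hB|hB]] : (B %% 3)%Z = 0 \/ (B %% 3)%Z = 1 \/ (B %% 3)%Z = 2 by lia.
- exists (@Ordinal 3 2 isT), true, ((A + B + 2) %/ 6)%Z, ((- B) %/ 3)%Z.
  rewrite /sgn /pint /=; congr (_, _); lia.
- exists (@Ordinal 3 0 isT), true, ((1 - B) %/ 3)%Z, ((B - A) %/ 6)%Z.
  rewrite /sgn /pint /=; congr (_, _); lia.
- exists (@Ordinal 3 1 isT), true, ((B - A + 2) %/ 6)%Z, ((A + B) %/ 6)%Z.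
  rewrite /sgn /pint /=; congr (_, _); lia.
- exists (@Ordinal 3 2 isT), false, ((2 - A - B) %/ 6)%Z, (B %/ 3)%Z.
  rewrite /sgn /pint /=; congr (_, _); lia.
- exists (@Ordinal 3 1 isT), false, ((A - B + 2) %/ 6)%Z, ((- (A + B)) %/ 6)%Z.
  rewrite /sgn /pint /=; congr (_, _); lia.
- exists (@Ordinal 3 0 isT), false, ((B + 1) %/ 3)%Z, ((A - B) %/ 6)%Z.
  rewrite /sgn /pint /=; congr (_, _); lia.
Qed.

Lemma natcast (n : nat) : ((n : int)%:~R : rat) = n%:R.
Proof. by []. Qed.

Theorem theorem8p6 (N : nat) :
  (forall w : hsp -> hsp, inWzero w -> atomic_len w = N%:R ->
     (forall x : P2, Oset w x <-> exists i : 'I_3, Ohat (sigma i \o w) x) /\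
     (forall (i j : 'I_3) (x : P2),
        Ohat (sigma i \o w) x -> Ohat (sigma j \o w) x -> i = j)) /\
  ((forall x : P2, U (12 * N + 4)%N x <-> exists v, inBhat N v /\ Ohat v x) /\
   (forall (v v' : hsp -> hsp) (x : P2),
      inBhat N v -> inBhat N v' -> Ohat v x -> Ohat v' x -> v = v')).
Proof.
split.
  move=> w hw _; have [e he] := inW_Fe hw.1; subst w.
  split.
    move=> x; rewrite Oset_char; split.
      case=> k [hk ->]; have [i [sg hx]] := orbit_eq (ea e) (eb e) hk.
      by exists i; apply/(Ohat_char i _ hw); exists sg.
    case=> i /(Ohat_char i x hw) [sg ->].
    have [k [hk hx]] := orbit_eq2 (ea e) (eb e) i sg.
    by exists k; split => //; rewrite hx.
  move=> i j x /(Ohat_char i x hw) [s1 ->] /(Ohat_char j _ hw) [s2 /castp_inj].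
  by case/res_key.
split.
  move=> x; split.
    case=> A [B [-> h]].
    have [i [sg [a [b hab]]]] := U_solve h.
    have [pi hpi] := W0c_ex a b.
    have hw : inWzero (Fe (El a b pi)) by apply/inWzero_Fe.
    exists (sigma i \o Fe (El a b pi)); split; last first.
      by apply/(Ohat_char i _ hw); exists sg; rewrite -hab.
    split; first by exists i, (Fe (El a b pi)).
    rewrite atomic_sigma /=.
    have hz : (pint i a b).1 ^+ 2 + 3 * (pint i a b).2 ^+ 2 = (12 * N + 4)%N.
      have [hA hB] : A = (sgn sg (pint i a b)).1 /\ B = (sgn sg (pint i a b)).2 by rewrite -hab.
      by rewrite hA hB in h; clear hab hA hB; case: sg h => /= h; nia.
    have := norm_pint i a b; rewrite hz natcast natrD natrM => H.
    lra.
  case=> v [[[i [w [hw ->]]] hN] hO].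
  have [e he] := inW_Fe hw.1; subst w.
  move/(Ohat_char i x hw): hO => [sg ->].
  exists (sgn sg (pint i (ea e) (eb e))).1, (sgn sg (pint i (ea e) (eb e))).2.
  split; first by case: (sgn _ _).
  apply: (@intr_inj rat).
  have H := norm_pint i (ea e) (eb e).
  rewrite atomic_sigma in hN; rewrite hN in H.
  rewrite natcast natrD natrM.
  have -> : (sgn sg (pint i (ea e) (eb e))).1 ^+ 2 + 3 * (sgn sg (pint i (ea e) (eb e))).2 ^+ 2
          = (pint i (ea e) (eb e)).1 ^+ 2 + 3 * (pint i (ea e) (eb e)).2 ^+ 2.
    by case: sg; rewrite /sgn //= !sqrrN.
  rewrite H; lra.
move=> v v' x [[i [w [hw ->]]] _] [[j [w' [hw' ->]]] _].
have [e he] := inW_Fe hw.1; subst w.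
have [e' he'] := inW_Fe hw'.1; subst w'.
move=> /(Ohat_char i x hw) [s1 ->] /(Ohat_char j _ hw') [s2 /castp_inj /res_key [hij _ ha hb]].
subst j.
move: hw hw' ha hb; rewrite !inWzero_Fe; case: e => a b pi; case: e' => a' b' pi' /= h1 h2 ha hb.
subst a' b'; by rewrite (W0c_uniq h1 h2).
Qed.
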